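(* Let $G$ be a graph, let $\langle \mathcal{P}, T\rangle$ be a VPT representation of $G$, let $C$ be a clique of $G$ and let $q\in V(T)$ with $C=C_q$. If $d_T(q)=h$, then the branch graph $B(G/C)$ is $h$-colorable.
   Context: All graphs are finite, simple and connected. A clique is a maximal complete set of vertices. A VPT representation $\langle \mathcal{P},T\rangle$ of a graph $G$ is a family $\mathcal{P}=(P_v)_{v\in V(G)}$ of subpaths of a tree $T$ such that two distinct vertices $v,v'$ of $G$ are adjacent iff $P_v$ and $P_{v'}$ share at least one vertex. For $q\in V(T)$, $C_q=\{v\in V(G): q\in V(P_v)\}$. For a clique $C$ of $G$, the branch graph $B(G/C)$ has vertex set the vertices of $V(G)\setminus C$ adjacent to some vertex of $C$, and two such vertices $v,w$ are adjacent in $B(G/C)$ iff (1) $vw\notin E(G)$; (2) some vertex of $C$ is adjacent to both $v$ and $w$; and (3) there exist $v',w'\in C$ with $v'$ adjacent to $v$ but not to $w$, and $w'$ adjacent to $w$ but not to $v$. A graph is $k$-colorable if its vertices can be colored with at most $k$ colors so that adjacent vertices get different colors. *)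

(* Defs.v *)
From mathcomp Require Import all_boot.
Set Implicit Arguments.
Unset Strict Implicit.
Unset Printing Implicit Defensive.

Definition simple_graph (V : finType) (e : rel V) : Prop :=
  symmetric e /\ irreflexive e.

Definition connected_graph (V : finType) (e : rel V) : Prop :=
  forall x y : V, connect e x y.

Definition graph (V : finType) (e : rel V) : Prop :=
  simple_graph e /\ connected_graph e.

Definition acyclic (W : finType) (e : rel W) : Prop :=
  forall s : seq W, uniq s -> 3 <= size s -> ~ cycle e s.

Definition tree (W : finType) (e : rel W) : Prop :=
  graph e /\ acyclic e.

Definition is_path (W : finType) (e : rel W) (s : seq W) : Prop :=
  exists x p, s = x :: p /\ uniq s /\ path e x p.

Definition VPT_rep (V W : finType) (eG : rel V) (eT : rel W)
  (P : V -> seq W) : Prop :=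
  tree eT /\ (forall v, is_path eT (P v)) /\
  (forall v v' : V, v != v' -> (eG v v' <-> exists q, (q \in P v) && (q \in P v'))).

Definition Cq (V W : finType) (P : V -> seq W) (q : W) : {set V} :=
  [set v | q \in P v].

Definition complete (V : finType) (e : rel V) (C : {set V}) : Prop :=
  forall x y, x \in C -> y \in C -> x != y -> e x y.

Definition clique (V : finType) (e : rel V) (C : {set V}) : Prop :=
  complete e C /\ (forall D : {set V}, complete e D -> C \subset D -> D = C).

Definition branch_vertex (V : finType) (e : rel V) (C : {set V}) (v : V) : bool :=
  (v \notin C) && [exists c in C, e v c].

Definition branch_adj (V : finType) (e : rel V) (C : {set V}) (v w : V) : bool :=
  [&& branch_vertex e C v, branch_vertex e C w,
      ~~ e v w,
      [exists c in C, e c v && e c w],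
      [exists v' in C, e v' v && ~~ e v' w] &
      [exists w' in C, e w' w && ~~ e w' v]].

Definition degree (W : finType) (e : rel W) (q : W) : nat := #|[set r | e q r]|.

Definition branch_colorable (V : finType) (e : rel V) (C : {set V}) (k : nat) : Prop :=
  exists f : V -> nat,
    (forall v, branch_vertex e C v -> f v < k) /\
    (forall v w, branch_adj e C v w -> f v != f w).

(* Main.v *)
Require Import Defs.
From mathcomp Require Import all_boot.
From mathcomp Require Import zify.
Set Implicit Arguments.
Unset Strict Implicit.

Definition rm (W : finType) (e : rel W) (z : W) : rel W :=
  fun x y => [&& e x y, x != z & y != z].

Lemma rm_sym (W : finType) (e : rel W) z : symmetric e -> symmetric (rm e z).
Proof.
move=> se x y; rewrite /rm se.
by case: (x != z); case: (y != z); rewrite ?andbF ?andbT.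
Qed.

Lemma rm_csym (W : finType) (e : rel W) z : symmetric e -> connect_sym (rm e z).
Proof. by move=> se; apply: sym_connect_sym; apply: rm_sym. Qed.

Lemma path_rm (W : finType) (e : rel W) z x p :
  path e x p -> z \notin x :: p -> path (rm e z) x p.
Proof.
move=> hp hz; apply: (sub_in_path (P := predC1 z)) hp.
- by move=> a b ha hb hab; rewrite /rm hab; rewrite !inE in ha hb; rewrite ha hb.
- apply/allP => y hy /=; apply/eqP => eyz; by rewrite -eyz hy in hz.
Qed.

Lemma path_rm_all (W : finType) (e : rel W) z x p :
  path (rm e z) x p -> all (predC1 z) p.
Proof.
elim: p x => //= y p IH x /andP[/and3P[_ _ hy] hp]; by rewrite hy (IH y).
Qed.

Lemma conn_in (W : finType) (e : rel W) z S a b : symmetric e ->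
  is_path e S -> z \notin S -> a \in S -> b \in S -> connect (rm e z) a b.
Proof.
move=> se [x [p [-> [_ hp]]]] hz ha hb.
have hp' := path_rm hp hz.
have c1 := path_connect hp' ha. have c2 := path_connect hp' hb.
rewrite (rm_csym z se) in c1.
exact: connect_trans c1 c2.
Qed.


Lemma conn_path (W : finType) (e : rel W) z x p a b : symmetric e ->
  path e x p -> z \notin x :: p -> a \in x :: p -> b \in x :: p -> connect (rm e z) a b.
Proof.
move=> se hp hz ha hb.
have hp' := path_rm hp hz.
have c1 := path_connect hp' ha. have c2 := path_connect hp' hb.
rewrite (rm_csym z se) in c1.
exact: connect_trans c1 c2.
Qed.

Lemma Uniq (W : finType) (e : rel W) z r1 r2 : symmetric e -> acyclic e ->
  e z r1 -> e z r2 -> r1 != r2 -> ~ connect (rm e z) r1 r2.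
Proof.
move=> se ae e1 e2 neq /connectP [p hp hl].
case/shortenP: hp hl => p' hp' up' _ hl.
case: p' hp' up' hl => [|y t] hp' up' hl.
  by rewrite /= in hl; rewrite hl eqxx in neq.
have hall := path_rm_all hp'.
have hr1 : r1 != z by case/andP: hp' => /and3P[].
apply: (ae [:: z, r1, y & t]).
- rewrite /= in up' *; rewrite up' andbT.
  move: hall; rewrite /= => /andP[hy /allP ht].
  rewrite !inE !negb_or eq_sym hr1 (eq_sym z y) hy /=.
  by apply/negP => /ht /=; rewrite eqxx.
- by [].
- rewrite /cycle /= e1 /=.
  rewrite -cats1 cat_path /= andbT.
  have -> : last y t = r2 by [].
  rewrite (se _ z) e2 andbT.
  have : path e r1 (y :: t) by apply: (sub_path _ hp') => a b /and3P[].
  done.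
Qed.

Lemma sepG (W : finType) (e : rel W) x1 t1 b y t2 a c : symmetric e -> acyclic e ->
  path e x1 (t1 ++ b :: y :: t2) -> uniq (x1 :: t1 ++ b :: y :: t2) ->
  a \in x1 :: t1 -> c \in y :: t2 -> ~ connect (rm e b) a c.
Proof.
move=> se ae hp hu ha hc hac.
rewrite cat_path /= in hp. case/and4P: hp => hp1 hlb hby hp2.
rewrite -cat_cons cat_uniq in hu. case/and3P: hu => u1 hh u2.
have hb1 : b \notin x1 :: t1 by apply/negP => hb; move: hh; rewrite /= hb.
have hb2 : b \notin y :: t2 by case/andP: u2.
have hy1 : y \notin x1 :: t1.
  by apply/negP => hy; move: hh; rewrite /= hy orbT.
have c1 : connect (rm e b) a (last x1 t1).
  by apply: (conn_path se hp1 hb1 ha); apply: mem_last.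
have c2 : connect (rm e b) y c.
  by apply: (conn_path se hp2 hb2 _ hc); rewrite inE eqxx.
apply: (Uniq (z := b) (r1 := last x1 t1) (r2 := y) se ae).
- by rewrite se.
- by [].
- apply/eqP => el; move: hy1; rewrite -el mem_last.
  done.
- rewrite (rm_csym b se) in c1; rewrite (rm_csym b se) in c2.
  exact: connect_trans c1 (connect_trans hac c2).
Qed.

Lemma sepI (W : finType) (e : rel W) x0 p a b c : symmetric e -> acyclic e ->
  path e x0 p -> uniq (x0 :: p) ->
  a \in x0 :: p -> b \in x0 :: p -> c \in x0 :: p ->
  index a (x0 :: p) < index b (x0 :: p) -> index b (x0 :: p) < index c (x0 :: p) ->
  ~ connect (rm e b) a c.
Proof.
move=> se ae hp hu ha hb hc hab hbc.
have hj : index b (x0 :: p) < size (x0 :: p) by rewrite index_mem.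
have E := cat_take_drop (index b (x0 :: p)) (x0 :: p).
rewrite (drop_nth b hj) nth_index // in E.
move: E; set s1 := take _ _; set s2 := drop _ _ => E.
have hsz : size s1 = index b (x0 :: p) by rewrite /s1 size_takel // ltnW.
clearbody s1 s2.
rewrite -E in hu ha hc hab hbc hp.
have hu' := hu; rewrite cat_uniq in hu'; case/and3P: hu' => u1 hh u2.
have hb1 : b \notin s1 by apply/negP => hb1; move: hh; rewrite /= hb1.
have ib : index b (s1 ++ b :: s2) = size s1.
  by rewrite index_cat (negbTE hb1) /= eqxx addn0.
rewrite ib in hab hbc.
have ha1 : a \in s1.
  apply/negPn/negP => na; move: hab; rewrite index_cat (negbTE na).
  by rewrite ltnNge leq_addr.
have hc2 : c \in s2.
  move: hc; rewrite mem_cat inE; case/or3P => // [hc1|/eqP ecb].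
  - by move: hbc; rewrite index_cat hc1 ltnNge ltnW // index_mem.
  - by move: hbc; rewrite ecb ib ltnn.
clear ha hc hab hbc ib hsz hh u1 hb1 u2.
case: s1 E hu hp ha1 => [//|x1 t1] E hu hp ha1.
case: s2 E hu hp hc2 => [//|y t2] E hu hp hc2.
case: E hu hp => <- <- hu hp.
exact: (sepG se ae hp hu ha1 hc2).
Qed.

Lemma sepI2 (W : finType) (e : rel W) x0 p a b c : symmetric e -> acyclic e ->
  path e x0 p -> uniq (x0 :: p) ->
  a \in x0 :: p -> b \in x0 :: p -> c \in x0 :: p ->
  (index a (x0 :: p) < index b (x0 :: p) < index c (x0 :: p)) \/
  (index c (x0 :: p) < index b (x0 :: p) < index a (x0 :: p)) ->
  ~ connect (rm e b) a c.
Proof.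
move=> se ae hp hu ha hb hc [/andP[h1 h2]|/andP[h1 h2]].
- exact: (sepI se ae hp hu ha hb hc h1 h2).
- rewrite (rm_csym b se); exact: (sepI se ae hp hu hc hb ha h1 h2).
Qed.

Lemma Exist (W : finType) (e : rel W) q x : x != q -> connect e q x ->
  exists r, e q r && connect (rm e q) r x.
Proof.
move=> nxq /connectP [p hp hl].
case/shortenP: hp hl => p' hp' up' _ hl.
case: p' hp' up' hl => [|r t] hp' up' hl.
  by rewrite /= in hl; rewrite hl eqxx in nxq.
case/andP: hp' => eqr hpt.
exists r; rewrite eqr /=.
apply/connectP; exists t => //.
apply: path_rm => //.
by case/andP: up'.
Qed.

Theorem mainTheorem2 (V W : finType) (eG : rel V) (eT : rel W)
  (P : V -> seq W) (C : {set V}) (q : W) (h : nat) :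
  graph eG -> VPT_rep eG eT P -> clique eG C -> C = Cq P q ->
  degree eT q = h -> branch_colorable eG C h.
Proof.
move=> _ [[[[seT ieT] cT] aT] [hpath hadj]] _ hC hdeg.
pose N := [set r | eT q r].
pose comp x := odflt q [pick r | eT q r && connect (rm eT q) r x].
have compP : forall x, x != q -> eT q (comp x) && connect (rm eT q) (comp x) x.
  move=> x nx; rewrite /comp; case: pickP => [r //|none].
  have [r hr] := Exist nx (cT q x).
  by rewrite none in hr.
pose f v := index (comp (head q (P v))) (enum N).
have inC : forall v, (v \in C) = (q \in P v) by move=> v; rewrite hC inE.
have hhead : forall v, q \notin P v -> head q (P v) != q /\ head q (P v) \in P v.
  move=> v nq; have [x [p [E _]]] := hpath v.
  rewrite E /= inE eqxx; split => //.
  by apply/eqP => exq; move: nq; rewrite E inE -exq eqxx.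
exists f; split.
  move=> v /andP[hv _]; rewrite inC in hv.
  have [hh _] := hhead v hv.
  have /andP[hN _] := compP _ hh.
  by rewrite -hdeg /degree cardE /f index_mem mem_enum inE.
move=> v w /and5P[/andP[hv _] /andP[hw _] nvw /existsP[c /andP[cC /andP[ecv ecw]]]
  /andP[/existsP[v' /andP[v'C /andP[ev'v nv'w]]] /existsP[w' /andP[w'C /andP[ew'w nw'v]]]]].
apply/negP => /eqP hf.
have disj : forall u u', u != u' -> ~~ eG u u' -> forall x, x \in P u -> x \in P u' -> False.
  move=> u u' nu nadj x h1 h2; move/negP: nadj; apply; apply/(hadj u u' nu).
  by exists x; rewrite h1 h2.
have meet : forall u u', u != u' -> eG u u' -> exists x, (x \in P u) && (x \in P u').
  by move=> u u' nu adj; apply/(hadj u u' nu).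
have neqC : forall u u', u \in C -> u' \notin C -> u != u'.
  by move=> u u' h1 h2; apply/eqP => e; move: h1; rewrite e (negbTE h2).
have nvw' : v != w by apply/eqP => e; move: nv'w; rewrite -e ev'v.
have [yv /andP[ycv yvv]] := meet c v (neqC _ _ cC hv) ecv.
have [yw /andP[ycw yww]] := meet c w (neqC _ _ cC hw) ecw.
have [y1 /andP[y1v' y1v]] := meet v' v (neqC _ _ v'C hv) ev'v.
have [y2 /andP[y2w' y2w]] := meet w' w (neqC _ _ w'C hw) ew'w.
have dvw := disj v w nvw' nvw.
have dv'w := disj v' w (neqC _ _ v'C hw) nv'w.
have dw'v := disj w' v (neqC _ _ w'C hv) nw'v.
rewrite inC in hv; rewrite inC in hw.
rewrite inC in cC; rewrite inC in v'C; rewrite inC in w'C.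
have [hv1 hv2] := hhead v hv.
have [hw1 hw2] := hhead w hw.
have /andP[Nv cv] := compP _ hv1.
have /andP[Nw cw] := compP _ hw1.
have ecomp : comp (head q (P v)) = comp (head q (P w)).
  have := congr1 (nth q (enum N)) hf; rewrite /f !nth_index //.
  by rewrite mem_enum inE.
  by rewrite mem_enum inE.
have same : connect (rm eT q) yv yw.
  have c1 : connect (rm eT q) yv (head q (P v)).
    exact: conn_in seT (hpath v) hv yvv hv2.
  have c2 : connect (rm eT q) (head q (P w)) yw.
    exact: conn_in seT (hpath w) hw hw2 yww.
  apply: connect_trans c1 _; apply: connect_trans _ c2.
  rewrite (rm_csym q seT) in cv.
  by apply: connect_trans cv _; rewrite ecomp.
have cw' : connect (rm eT yv) q yw.
  have yvw' : yv \notin P w' by apply/negP => h1; exact: dw'v _ h1 yvv.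
  have yvw : yv \notin P w by apply/negP => h1; exact: dvw _ yvv h1.
  apply: connect_trans (conn_in seT (hpath w') yvw' w'C y2w') _.
  exact: conn_in seT (hpath w) yvw y2w yww.
have cv' : connect (rm eT yw) q yv.
  have ywv' : yw \notin P v' by apply/negP => h1; exact: dv'w _ h1 yww.
  have ywv : yw \notin P v by apply/negP => h1; exact: dvw _ h1 yww.
  apply: connect_trans (conn_in seT (hpath v') ywv' v'C y1v') _.
  exact: conn_in seT (hpath v) ywv y1v yvv.
have [x0 [p [Ec [uc pc]]]] := hpath c.
rewrite Ec in ycv ycw cC uc.
have nqv : q != yv by apply/eqP => e; rewrite e yvv in hv.
have nqw : q != yw by apply/eqP => e; rewrite e yww in hw.
have nvw2 : yv != yw by apply/eqP => e; rewrite -e in yww; exact: dvw _ yvv yww.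
have ineq : forall a b, a \in x0 :: p -> a != b -> index a (x0 :: p) != index b (x0 :: p).
  move=> a b ha; apply: contraNneq => ei; apply/eqP.
  by rewrite -(nth_index a ha) ei nth_index // -index_mem -ei index_mem.
have i1 := ineq _ _ cC nqv. have i2 := ineq _ _ cC nqw. have i3 := ineq _ _ ycv nvw2.
move: (index q (x0 :: p)) (index yv (x0 :: p)) (index yw (x0 :: p)) i1 i2 i3
  (sepI2 seT aT pc uc cC ycv ycw) (sepI2 seT aT pc uc cC ycw ycv)
  (sepI2 seT aT pc uc ycv cC ycw) => iq iv iw i1 i2 i3 sA sB sC.
have key : ((iq < iv < iw) \/ (iw < iv < iq)) \/ ((iq < iw < iv) \/ (iv < iw < iq))
  \/ ((iv < iq < iw) \/ (iw < iq < iv)).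
  move: i1 i2 i3; case: (ltngtP iq iv) => // h1 _; case: (ltngtP iq iw) => // h2 _;
  case: (ltngtP iv iw) => // h3 _; rewrite ?h1 ?h2 ?h3 /=; auto.
case: key => [k|[k|k]].
- exact: sA k cw'.
- exact: sB k cv'.
- exact: sC k same.
Qed.
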